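(* Let $\mu=(\mu_i;i\in I)$ be a signature, i.e. a function $\mu:I\to\mathbb{N}^*$ from an arbitrary index set $I$ into the positive integers. The following statements are equivalent: (i) every ideal of $\Omega_\mu$ is representable; (ii) the set $\mu^{-1}[\mathbb{N}^*\setminus\{1\}]=\{i\in I:\mu_i\geq 2\}$ is finite; (iii) the set $\mathscr{J}(\Omega_\mu)$ of ideals of $\Omega_\mu$, equipped with the topology induced by the product topology on the power set $\mathfrak{P}(\Omega_\mu)\cong\{0,1\}^{\Omega_\mu}$, is compact.
   Context: A relational structure of signature $\mu$ is $\mathfrak A=(A;(R_i)_{i\in I})$ where each $R_i:A^{\mu_i}\to\{0,1\}$ is a $\mu_i$-ary relation on the set $A$. An embedding of $\mathfrak A$ into $\mathfrak B$ (same signature) is an injective map $f:A\to B$ such that $R^{\mathfrak A}_i(x_1,\dots,x_{\mu_i})=R^{\mathfrak B}_i(f(x_1),\dots,f(x_{\mu_i}))$ for all $i$ and all tuples; $\mathfrak A\le\mathfrak B$ means such an embedding exists. $\Omega_\mu$ is the set of isomorphism types of finite relational structures of signature $\mu$, partially ordered by $\le$. An ideal of $\Omega_\mu$ is a non-empty subset which is an initial segment (downward closed under $\le$) and up-directed. The age of a relational structure $\mathfrak A$ is the set of isomorphism types of its finite induced substructures. An ideal $\mathcal A$ of $\Omega_\mu$ is representable if there is a relational structure $\mathfrak A$ of signature $\mu$ with $\mathrm{age}(\mathfrak A)=\mathcal A$. *)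

(* Defs.v *)
From HB Require Import structures.
From mathcomp Require Import all_boot all_order all_algebra.
From mathcomp Require Import all_classical all_reals all_analysis.
Set Implicit Arguments. Unset Strict Implicit. Unset Printing Implicit Defensive.
Local Open Scope classical_set_scope.

(* A signature is mu : I -> nat (positivity is a hypothesis of the theorem). *)
Record relstruct (I : Type) (mu : I -> nat) := RelStruct {
  carrier : Type;
  rel : forall i : I, ('I_(mu i) -> carrier) -> bool }.

Definition embedding I (mu : I -> nat) (A B : relstruct mu)
  (f : carrier A -> carrier B) : Prop :=
  injective f /\
  forall (i : I) (x : 'I_(mu i) -> carrier A), @rel I mu A i x = @rel I mu B i (f \o x).
Arguments embedding {I mu} A B f.

Definition embeds I (mu : I -> nat) (A B : relstruct mu) : Prop :=
  exists f, embedding A B f.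
Arguments embeds {I mu} A B.

Definition isomorphic I (mu : I -> nat) (A B : relstruct mu) : Prop :=
  exists f, embedding A B f /\ (forall y, exists x, f x = y).
Arguments isomorphic {I mu} A B.

(* finite structures: every finite structure is isomorphic to one whose
   carrier is 'I_n for some n (n = 0 allowed: the empty structure) *)
Definition finstruct I (mu : I -> nat) :=
  {n : nat & forall i : I, ('I_(mu i) -> 'I_n) -> bool}.

Definition fs_struct I (mu : I -> nat) (F : finstruct mu) : relstruct mu :=
  @RelStruct I mu 'I_(projT1 F) (projT2 F).

Definition isotype I (mu : I -> nat) (F : finstruct mu) : finstruct mu -> Prop :=
  fun G => isomorphic (fs_struct G) (fs_struct F).

Definition Omega I (mu : I -> nat) :=
  {P : finstruct mu -> Prop | exists F, P = isotype F}.

Definition Ole I (mu : I -> nat) (a b : Omega mu) : Prop :=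
  exists F G : finstruct mu, proj1_sig a F /\ proj1_sig b G /\
    embeds (fs_struct F) (fs_struct G).

Definition is_ideal I (mu : I -> nat) (X : set (Omega mu)) : Prop :=
  [/\ X !=set0,
      (forall a b, Ole a b -> X b -> X a) &
      (forall a b, X a -> X b -> exists c, [/\ X c, Ole a c & Ole b c])].

Definition age I (mu : I -> nat) (A : relstruct mu) : set (Omega mu) :=
  [set a | exists F, proj1_sig a F /\ embeds (fs_struct F) A].

Definition representable I (mu : I -> nat) (X : set (Omega mu)) : Prop :=
  exists A : relstruct mu, age A = X.

(* J(Omega_mu) as a subset of P(Omega_mu) ~ {0,1}^Omega_mu with the product
   (pointwise) topology *)
Definition ideal_space I (mu : I -> nat) : set {ptws Omega mu -> bool} :=
  [set f | is_ideal (fun a => f a)].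
Arguments ideal_space {I} mu.

(* Main.v *)
Require Import Defs.
From HB Require Import structures.
From mathcomp Require Import all_boot all_order all_algebra.
From mathcomp Require Import all_classical all_reals all_analysis.
From mathcomp Require Import zify finmap.
Set Implicit Arguments. Unset Strict Implicit. Unset Printing Implicit Defensive.
Local Open Scope classical_set_scope.

Section Basics.
Variables (I : Type) (mu : I -> nat).
Implicit Types (A B C : relstruct mu) (F G : finstruct mu) (a b c : Omega mu).

Lemma emb_id A : embedding A A id.
Proof. by split=> // i x. Qed.

Lemma emb_comp A B C f g : embedding A B f -> embedding B C g -> embedding A C (g \o f).
Proof.
move=> [fi fr] [gi gr]; split; first by move=> x y /gi /fi.
by move=> i x; rewrite fr gr.
Qed.

Lemma embeds_refl A : embeds A A.
Proof. by exists id; apply: emb_id. Qed.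

Lemma embeds_trans A B C : embeds A B -> embeds B C -> embeds A C.
Proof. by move=> [f hf] [g hg]; exists (g \o f); apply: emb_comp hf hg. Qed.

Lemma iso_refl A : isomorphic A A.
Proof. by exists id; split; [apply: emb_id| move=> y; exists y]. Qed.

Lemma iso_sym A B : isomorphic A B -> isomorphic B A.
Proof.
move=> [f [[fi fr] fs]].
have [g hg] := choice fs.
exists g; split; last by move=> x; exists (f x); apply: fi; rewrite hg.
split; first by move=> x y E; rewrite -(hg x) -(hg y) E.
move=> i x; rewrite fr; congr (Defs.rel _); apply: funext => j /=; by rewrite hg.
Qed.

Lemma iso_trans A B C : isomorphic A B -> isomorphic B C -> isomorphic A C.
Proof.
move=> [f [hf fs]] [g [hg gs]]; exists (g \o f); split; first exact: emb_comp hf hg.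
by move=> z; have [y <-] := gs z; have [x <-] := fs y; exists x.
Qed.

Lemma iso_embeds A B : isomorphic A B -> embeds A B.
Proof. by move=> [f [hf _]]; exists f. Qed.

Definition rep a : finstruct mu := projT1 (cid (proj2_sig a)).
Lemma repP a : proj1_sig a = isotype (rep a).
Proof. exact: (projT2 (cid (proj2_sig a))). Qed.

Definition toOm F : Omega mu := exist _ (isotype F) (ex_intro _ F erefl).

Lemma inOm a F : proj1_sig a F <-> isomorphic (fs_struct F) (fs_struct (rep a)).
Proof. by rewrite repP. Qed.

Lemma rep_toOm F : isomorphic (fs_struct (rep (toOm F))) (fs_struct F).
Proof. apply: iso_sym; apply/inOm; exact: iso_refl. Qed.

Lemma Ole_rep a b : Ole a b <-> embeds (fs_struct (rep a)) (fs_struct (rep b)).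
Proof.
split.
  move=> [F [G [/inOm Fa [/inOm Gb e]]]].
  apply: embeds_trans (iso_embeds (iso_sym Fa)) _.
  exact: embeds_trans e (iso_embeds Gb).
move=> e; exists (rep a), (rep b); split; first by apply/inOm; exact: iso_refl.
by split=> //; apply/inOm; exact: iso_refl.
Qed.

Lemma Ole_refl a : Ole a a.
Proof. by apply/Ole_rep; exact: embeds_refl. Qed.

Lemma Ole_trans a b c : Ole a b -> Ole b c -> Ole a c.
Proof. by move=> /Ole_rep h1 /Ole_rep h2; apply/Ole_rep; exact: embeds_trans h1 h2. Qed.

Lemma age_rep A a : age A a <-> embeds (fs_struct (rep a)) A.
Proof.
split.
  move=> [F [/inOm Fa e]]; exact: embeds_trans (iso_embeds (iso_sym Fa)) e.
by move=> e; exists (rep a); split=> //; apply/inOm; exact: iso_refl.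
Qed.

Lemma age_toOm A F : age A (toOm F) <-> embeds (fs_struct F) A.
Proof.
rewrite age_rep; split=> e.
  exact: embeds_trans (iso_embeds (iso_sym (rep_toOm F))) e.
exact: embeds_trans (iso_embeds (rep_toOm F)) e.
Qed.

Lemma Ole_toOm F G : Ole (toOm F) (toOm G) <-> embeds (fs_struct F) (fs_struct G).
Proof.
rewrite Ole_rep; split=> e.
  apply: embeds_trans (iso_embeds (iso_sym (rep_toOm F))) _.
  exact: embeds_trans e (iso_embeds (rep_toOm G)).
apply: embeds_trans (iso_embeds (rep_toOm F)) _.
exact: embeds_trans e (iso_embeds (iso_sym (rep_toOm G))).
Qed.

Lemma Ole_toOm_l F b : Ole (toOm F) b <-> embeds (fs_struct F) (fs_struct (rep b)).
Proof.
rewrite Ole_rep; split=> e.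
  exact: embeds_trans (iso_embeds (iso_sym (rep_toOm F))) e.
exact: embeds_trans (iso_embeds (rep_toOm F)) e.
Qed.

End Basics.

Section Fin.
Variables (I : Type) (mu : I -> nat) (mu_pos : forall i, (0 < mu i)%N).
Implicit Types (A B C : relstruct mu) (F G : finstruct mu) (a b c : Omega mu).

Definition ord0_elim (T : Type) (j : 'I_0) : T.
Proof. by case: j. Defined.

Definition emptyF : finstruct mu := existT _ 0%N (fun i (x : 'I_(mu i) -> 'I_0) => false).

Lemma emptyF_emb A : embeds (fs_struct emptyF) A.
Proof.
exists (@ord0_elim (carrier A)); split; first by case.
by move=> i x; case: (x (Ordinal (mu_pos i))).
Qed.

Lemma emb_factor A F G (e : carrier (fs_struct G) -> carrier A) f phi :
  embedding (fs_struct G) A e -> embedding (fs_struct F) A f ->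
  (forall j, e (phi j) = f j) -> embedding (fs_struct F) (fs_struct G) phi.
Proof.
move=> [ei er] [fi fr] ef; split.
  by move=> x y E; apply: fi; rewrite -!ef E.
move=> i x; rewrite fr er; congr (Defs.rel _); apply: funext => j /=; by rewrite ef.
Qed.

Lemma image_fin A k (h : 'I_k -> carrier A) :
  exists (C : finstruct mu) (e : 'I_(projT1 C) -> carrier A) (phi : 'I_k -> 'I_(projT1 C)),
    embedding (fs_struct C) A e /\ forall j, e (phi j) = h j.
Proof.
pose P j := fun l : 'I_k => `[< h l = h j >].
have Pj j : P j j by apply/asboolP.
pose r j := [arg min_(l < j | P j l) (l : nat)].
have rP j : h (r j) = h j.
  by rewrite /r; case: arg_minnP => // l /asboolP.
have rE j1 j2 : h j1 = h j2 -> r j1 = r j2.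
  move=> E; apply/val_inj/eqP; rewrite eqn_leq.
  rewrite /r; case: arg_minnP => // l1 Pl1 m1; case: arg_minnP => // l2 Pl2 m2.
  rewrite m1 ?m2 //; apply/asboolP.
    by move/asboolP: Pl1; rewrite E.
  by move/asboolP: Pl2; rewrite -E.
pose D := (r @: [set: 'I_k])%SET.
have rD j : r j \in D by apply/imsetP; exists j.
pose m := #|D|.
pose e (u : 'I_m) := h (enum_val u).
have eD (u : 'I_m) : enum_val u \in D by apply: enum_valP.
exists (existT _ m (fun i (x : 'I_(mu i) -> 'I_m) => Defs.rel (e \o x))).
exists e.
exists (fun j => enum_rank_in (rD j) (r j)); split; last first.
  by move=> j /=; rewrite /e enum_rankK_in // rP.
split=> //= u v; rewrite /e => E.
apply: enum_val_inj.
move: (eD u) (eD v) E => /imsetP[j1 _ ->] /imsetP[j2 _ ->].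
by rewrite !rP => /rE.
Qed.

End Fin.

Section AgeIdeal.
Variables (I : Type) (mu : I -> nat) (mu_pos : forall i, (0 < mu i)%N).
Implicit Types (A B C : relstruct mu) (F G : finstruct mu) (a b c : Omega mu).

Lemma age_ideal A : is_ideal (age A).
Proof.
split.
- by exists (toOm (emptyF mu)); apply/age_toOm; exact: emptyF_emb.
- by move=> a b /Ole_rep h /age_rep h2; apply/age_rep; exact: embeds_trans h h2.
move=> a b /age_rep [ea ha] /age_rep [eb hb].
pose na := projT1 (rep a); pose nb := projT1 (rep b).
pose h (j : 'I_(na + nb)) := match fintype.split j with inl l => ea l | inr r => eb r end.
have [C [e [phi [he ephi]]]] := image_fin h.
exists (toOm C); split.
- by apply/age_toOm; exists e.
- apply/Ole_rep; apply: embeds_trans (iso_embeds (iso_sym (rep_toOm C))).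
  exists (phi \o lshift nb); apply: emb_factor he ha _ => j /=.
  by rewrite ephi /h (unsplitK (inl _ _)).
- apply/Ole_rep; apply: embeds_trans (iso_embeds (iso_sym (rep_toOm C))).
  exists (phi \o @rshift na nb); apply: emb_factor he hb _ => j /=.
  by rewrite ephi /h (unsplitK (inr _ _)).
Qed.

End AgeIdeal.

Section Ultra.
Variables (I : Type) (mu : I -> nat) (mu_pos : forall i, (0 < mu i)%N).
Variable (NF : finite_set [set i | (2 <= mu i)%N]).
Variables (T : Type) (U : set_system T) (UU : UltraFilter U) (A : T -> relstruct mu).

Definition Gt := forall t, option (carrier (A t)).

Definition relo t i (v : 'I_(mu i) -> option (carrier (A t))) : bool :=
  `[< exists w, v = (fun j => Some (w j)) /\ @Defs.rel _ _ (A t) i w >].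

Lemma relo_some t i w : relo (fun j => Some (w j)) = @Defs.rel _ _ (A t) i w.
Proof.
rewrite /relo; apply/asboolP/idP => [[w' [E H]]|H]; last by exists w.
suff -> : w = w' by [].
apply: funext => j; have := congr1 (fun f => f j) E; by case.
Qed.

Definition stable (g : Gt) := exists W, U W /\ (forall t, W t -> g t <> None) /\
  (forall i, (mu i < 2)%N -> forall t t', W t -> W t' ->
     relo (fun _ : 'I_(mu i) => g t) = relo (fun _ : 'I_(mu i) => g t')).

Definition geq (g h : Gt) := U [set t | g t = h t /\ g t <> None].

Lemma U_meet W1 W2 : U W1 -> U W2 -> exists t, W1 t /\ W2 t.
Proof. by move=> h1 h2; have [t [? ?]] := filter_ex (filterI h1 h2); exists t. Qed.

Lemma ultra_bool (W : set T) (f : T -> bool) b : U W -> (forall t, W t -> f t = b) ->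
  `[< U [set t | f t] >] = b.
Proof.
move=> UW Wf; case: b Wf => Wf.
  by apply/asboolP; apply: filterS UW => t /Wf Ht; rewrite /= Ht.
apply/asboolP => Uf; have [t [/Wf ft ft']] := U_meet UW Uf.
by move: ft'; rewrite /= ft.
Qed.

Lemma U_or (S : set T) : U S \/ U (~` S).
Proof. exact: in_ultra_setVsetC. Qed.

Lemma U_forall_fin (K : finType) (P : K -> set T) :
  (forall k, U (P k)) -> U [set t | forall k, P k t].
Proof. by move=> h; apply: (@filter_forall T K P U _ h). Qed.

Lemma U_forallN (P : I -> set T) : (forall i, (2 <= mu i)%N -> U (P i)) ->
  U [set t | forall i, (2 <= mu i)%N -> P i t].
Proof.
move=> h.
have NF' : finite_set ([set i | (2 <= mu i)%N] : set {classic I}) := NF.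
have [X EX] := finite_fsetP.1 NF'.
have memX (i : {classic I}) : (2 <= mu i)%N = (i \in X).
  have := congr1 (fun S => S i) EX => /= E.
  by apply/idP/idP => H; move: H; rewrite E.
have FU : Filter U by typeclasses eauto.
have H2 := @filter_bigI T {classic I} X P U FU (fun i iX => h i (eq_ind_r is_true iX (memX i))).
apply: filterS H2 => t Ht i hi; apply: Ht.
by rewrite /= -memX.
Qed.

Lemma geq_sym g h : geq g h -> geq h g.
Proof. by apply: filterS => t [E D]; split=> //; rewrite -E. Qed.

Lemma geq_trans g h k : geq g h -> geq h k -> geq g k.
Proof.
move=> h1 h2; apply: filterS (filterI h1 h2) => t [[E1 D1] [E2 D2]].
by split=> //; rewrite E1.
Qed.

Lemma geq_refl g : stable g -> geq g g.
Proof. by move=> [W [UW [D _]]]; apply: filterS UW => t /D. Qed.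

Definition chooseG (P : Gt -> Prop) : Gt :=
  match pselect (exists h, P h) with
  | left H => proj1_sig (cid H)
  | right _ => (fun _ => None) end.

Lemma chooseGP P : (exists h, P h) -> P (chooseG P).
Proof. by rewrite /chooseG; case: pselect => // H _; exact: (proj2_sig (cid H)). Qed.

Definition canon (g : Gt) : Gt := chooseG (fun h => stable h /\ geq h g).

Lemma canon_spec g : stable g -> stable (canon g) /\ geq (canon g) g.
Proof. by move=> sg; apply: (@chooseGP (fun h => stable h /\ geq h g)); exists g; split=> //; exact: geq_refl. Qed.

Lemma canon_eq g h : geq g h -> canon g = canon h.
Proof.
move=> gh; rewrite /canon; congr chooseG; apply: funext => k; apply: propext.
split=> [[sk kg]|[sk kh]]; split=> //; first exact: geq_trans kg gh.
exact: geq_trans kh (geq_sym gh).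
Qed.

Lemma canon_idem g : stable g -> canon (canon g) = canon g.
Proof. by move=> sg; apply: canon_eq; exact: (canon_spec sg).2. Qed.

Definition UP := {g : Gt | stable g /\ canon g = g}.

Definition mk (g : Gt) (sg : stable g) : UP :=
  exist _ (canon g) (conj (canon_spec sg).1 (canon_idem sg)).

Lemma UP_eq (x y : UP) : geq (sval x) (sval y) -> x = y.
Proof.
case: x => g [sg cg]; case: y => h [sh ch] /= E.
have gh : g = h by rewrite -cg -ch; exact: canon_eq E.
subst h.
by congr exist; apply: Prop_irrelevance.
Qed.

Definition relU i (x : 'I_(mu i) -> UP) : bool :=
  `[< U [set t | relo (fun j => sval (x j) t)] >].

Definition UPs : relstruct mu := @RelStruct I mu UP relU.

Lemma UP_sub (F : finstruct mu) (e : carrier (fs_struct F) -> UP) :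
  embedding (fs_struct F) UPs e -> U [set t | embeds (fs_struct F) (A t)].
Proof.
case: F e => n RF e [ei er] /=.
pose g j := sval (e j).
have sg j : stable (g j) := (proj2_sig (e j)).1.
have [W hW] := choice sg.
have S1 : U [set t | forall j, W j t] by apply: U_forall_fin => j; case: (hW j).
have S2 : U [set t | forall jk : 'I_n * 'I_n, jk.1 != jk.2 ->
    ~ (g jk.1 t = g jk.2 t /\ g jk.1 t <> None)].
  apply: U_forall_fin => -[j k] /=.
  have [->|jk] := eqVneq j k; first by apply: filterS filterT.
  have : ~ geq (g j) (g k).
    move=> /UP_eq E; move/eqP: jk; apply; exact: ei.
  case: (U_or [set t | g j t = g k t /\ g j t <> None]) => // H _.
  by apply: filterS H => t Ht _.
have S3 : U [set t | forall i, (2 <= mu i)%N -> forall x : {ffun 'I_(mu i) -> 'I_n},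
    relo (fun l => g (x l) t) = RF i x].
  apply: U_forallN => i hi; apply: U_forall_fin => x.
  have := er i x; rewrite /= /relU => ->.
  case: (U_or [set t | relo (fun l => g (x l) t)]) => H.
    by move/asboolP: (H) => ->; apply: filterS H => t /= ->.
  have -> : `[< U [set t | relo (fun j => sval ((e \o x) j) t)] >] = false.
    apply/asboolP => H'; have [t [H1 H2]] := U_meet H H'; exact: H1 H2.
  by apply: filterS H => t /= /negP /negbTE.
apply: filterS (filterI S1 (filterI S2 S3)) => t [T1 [T2 T3]].
have def j : exists y, g j t = Some y.
  have [_ [D _]] := hW j; move: (D t (T1 j)); case: (g j t) => // y _; by exists y.
have [h hh] := choice def.
exists h; split.
  move=> j k hjk; apply/eqP/negPn/negP => jk.
  apply: (T2 (j, k) jk) => /=; rewrite !hh hjk; by split.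
move=> i x /=.
have [hi|hi] := leqP 2 (mu i).
  have := T3 i hi (finfun x).
  have -> : (fun l => g (finfun x l) t) = (fun l => Some (h (x l))).
    by apply: funext => l; rewrite ffunE hh.
  rewrite relo_some.
  have -> : fun_of_fin (finfun x) = x by apply: funext => l; rewrite ffunE.
  by move=> ->.
pose k := x (Ordinal (mu_pos i)).
have xk : x = fun _ => k.
  apply: funext => l; rewrite /k; congr x; apply/val_inj => /=.
  have := ltn_ord l; lia.
rewrite xk.
have [UW [D St]] := hW k.
have := er i (fun _ => k); rewrite /= /relU => ->.
have -> : @Defs.rel _ _ (A t) i (h \o (fun=> k)) = relo (fun _ : 'I_(mu i) => g k t).
  by rewrite hh -(relo_some (fun=> h k)).
apply: (@ultra_bool (W k)) => // t' Wt'.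
exact: St.
Qed.

Lemma UP_sup (F : finstruct mu) :
  U [set t | embeds (fs_struct F) (A t)] -> embeds (fs_struct F) UPs.
Proof.
case: F => n RF /= S.
pose E t : option ('I_n -> carrier (A t)) :=
  match pselect (exists e, embedding (fs_struct (existT _ n RF)) (A t) e) with
  | left H => Some (proj1_sig (cid H)) | right _ => None end.
have ES t : embeds (fs_struct (existT _ n RF)) (A t) -> exists e, E t = Some e.
  by rewrite /E; case: pselect => // H _; eexists.
have EN t e : E t = Some e -> embedding (fs_struct (existT _ n RF)) (A t) e.
  by rewrite /E; case: pselect => // H [<-]; exact: (proj2_sig (cid H)).
pose g j : Gt := fun t => Option.map (fun e => e j) (E t).
have sg j : stable (g j).
  exists [set t | embeds (fs_struct (existT _ n RF)) (A t)]; split=> //; split.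
    by move=> t /ES [e]; rewrite /g => ->.
  move=> i hi t t' /ES [e Ee] /ES [e' Ee']; rewrite /g Ee Ee' /=.
  rewrite (relo_some (fun=> e j)) (relo_some (fun=> e' j)).
  have [_ r1] := EN _ _ Ee; have [_ r2] := EN _ _ Ee'.
  by rewrite -(r1 i (fun=> j)) -(r2 i (fun=> j)).
exists (fun j => mk (sg j)); split.
  move=> j k /(congr1 sval) /= E1.
  have H : geq (g j) (g k).
    apply: geq_trans (geq_sym (canon_spec (sg j)).2) _.
    by rewrite E1; exact: (canon_spec (sg k)).2.
  have [t [[E2 D2] /ES [e Ee]]] := U_meet H S.
  move: E2; rewrite /g Ee /= => -[].
  by have [ei _] := EN _ _ Ee; apply: ei.
move=> i x /=; rewrite /relU /=.
have Ucan : U [set t | forall j, canon (g j) t = g j t].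
  apply: U_forall_fin => j; apply: filterS (canon_spec (sg j)).2 => t [? _] //.
apply: esym; apply: (ultra_bool (filterI S Ucan)) => t [/ES [e Ee] Ct].
have -> : (fun j => canon (g (x j)) t) = (fun j => Some (e (x j))).
  by apply: funext => l; rewrite Ct /g Ee.
rewrite (relo_some (e \o x)).
by have [_ r1] := EN _ _ Ee; rewrite -r1.
Qed.

Lemma age_UP a : age UPs a <-> U [set t | age (A t) a].
Proof.
rewrite age_rep; split.
  move=> [e he]; apply: filterS (UP_sub he) => t /age_rep //.
move=> H; apply: UP_sup; apply: filterS H => t /age_rep //.
Qed.

End Ultra.

Section Pos.
Variables (I : Type) (mu : I -> nat) (mu_pos : forall i, (0 < mu i)%N).
Variable (NF : finite_set [set i | (2 <= mu i)%N]).

Lemma ii_i (X : set (Omega mu)) : is_ideal X -> representable X.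
Proof.
move=> [[b0 Xb0] Xdown Xdir].
pose B b := [set t | X t /\ Ole b t].
have FF : Filter (filter_from X B).
  apply: filter_from_filter; first by exists b0.
  move=> b1 b2 X1 X2; have [c [Xc h1 h2]] := Xdir _ _ X1 X2.
  exists c => // t [Xt ct]; split; split=> //; exact: Ole_trans ct.
have PF : ProperFilter (filter_from X B).
  apply: filter_from_proper => // b Xb; exists b; split=> //; exact: Ole_refl.
have [U [UU sU]] := ultraFilterLemma PF.
pose A (t : Omega mu) := fs_struct (rep t).
exists (UPs U A); apply: funext => a; apply: propext.
rewrite (age_UP mu_pos NF UU A a); split.
  move=> H; have UB : U (B b0) by apply: sU; exists b0.
  have [t [/age_rep Ht [Xt _]]] := U_meet UU H UB.
  by apply: Xdown Xt; apply/Ole_rep.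
move=> Xa; have UB : U (B a) by apply: sU; exists a.
by apply: filterS UB => t [_ /Ole_rep h]; apply/age_rep.
Qed.

End Pos.

Lemma ptws_compactT (V : Type) : compact [set: {ptws V -> bool}].
Proof.
have H := @tychonoff {classic V} (fun _ => bool) (fun _ => setT) (fun _ => bool_compact).
have E : [set: {ptws V -> bool}] = [set f : {ptws V -> bool} | forall i : V, (@setT bool) (f i)].
  by apply/seteqP; split.
rewrite E. exact H.
Qed.

Lemma ptws_nbhs (V : Type) (p : {ptws V -> bool}) c :
  nbhs p [set f : {ptws V -> bool} | f c = p c].
Proof.
have H := @proj_continuous {classic V} (fun _ => bool) c p.
have H2 := H [set b | b = p c]; simpl in H2.
apply: H2; by apply/principal_filterP.
Qed.

Section Pos2.
Variables (I : Type) (mu : I -> nat) (mu_pos : forall i, (0 < mu i)%N).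
Variable (NF : finite_set [set i | (2 <= mu i)%N]).

Lemma ii_iii : compact (ideal_space mu).
Proof.
have cl : closed (ideal_space mu); last first.
  exact: (subclosed_compact cl (@ptws_compactT (Omega mu)) (fun _ _ => Logic.I)).
move=> p; rewrite closureEcvg => -[G PG [Gp JG]].
have GJ : G (ideal_space mu) by apply: JG.
have [U [UU sU]] := ultraFilterLemma PG.
have Uc c : U [set f : {ptws Omega mu -> bool} | f c = p c].
  by apply: sU; apply: Gp; exact: ptws_nbhs.
have UJ : U (ideal_space mu) by apply: sU.
pose Af (f : {ptws Omega mu -> bool}) : relstruct mu :=
  match pselect (is_ideal (fun a => f a)) with
  | left H => proj1_sig (cid (ii_i mu_pos NF H))
  | right _ => fs_struct (emptyF mu) end.
have Af_age (f : {ptws Omega mu -> bool}) : is_ideal (fun a => f a) -> age (Af f) = (fun a => f a).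
  rewrite /Af; case: pselect => // H _; exact: (proj2_sig (cid (ii_i mu_pos NF H))).
rewrite /ideal_space /=.
suff -> : (fun a => is_true (p a)) = age (UPs U Af) by exact: age_ideal.
apply: funext => a; apply: propext.
rewrite (age_UP mu_pos NF UU Af a).
have E : U [set f | age (Af f) a] <-> U [set f : {ptws Omega mu -> bool} | f a].
  split=> H; apply: filterS (filterI H UJ) => f [Hf Jf].
    by move: Hf; rewrite /= (Af_age f Jf).
  by rewrite /= (Af_age f Jf).
rewrite E; split.
  by move=> pa; apply: filterS (Uc a) => f /= ->.
move=> H; apply/negPn/negP => /negbTE pa.
have [f [/= H1 H2]] := U_meet UU H (Uc a).
by move: H1; rewrite H2 pa.
Qed.

End Pos2.

Lemma inf_inj (I : Type) (N : set I) : ~ finite_set N -> exists q : nat -> I, injective q /\ forall n, N (q n).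
Proof.
rewrite finite_setPn => /contrapT /card_leP /injfunPex [f _ finj].
have mT n : n \in [set: nat] by rewrite in_setT.
exists (fun n => val (f (exist _ n (mT n)))); split.
  move=> m n /= E. have := finj (exist _ m (mT m)) (exist _ n (mT n)) (in_setT _) (in_setT _).
  move=> H; suff : exist (fun x => x \in [set: nat]) m (mT m) = exist _ n (mT n) by case.
  by apply: H; apply: val_inj.
move=> n; exact: (set_mem (valP (f (exist _ n (mT n))))).
Qed.

Section Tuples.
Variables (I : Type) (mu : I -> nat) (mu_pos : forall i, (0 < mu i)%N).
Variables (q : nat -> I) (qinj : injective q) (qN : forall n, (2 <= mu (q n))%N).

Definition idx0 i : 'I_(mu i) := Ordinal (mu_pos i).
Definition idx1 n : 'I_(mu (q n)) := Ordinal (qN n).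

Definition pairT (C : Type) i (u v : C) : 'I_(mu i) -> C :=
  fun j => if (nat_of_ord j == 0)%N then u else v.
Arguments pairT {C} i u v.
Definition loopT (C : Type) i (u : C) : 'I_(mu i) -> C := fun _ => u.
Arguments loopT {C} i u.

Lemma comp_pair (C D : Type) (f : C -> D) i u v : f \o pairT i u v = pairT i (f u) (f v).
Proof. by apply: funext => j; rewrite /pairT /=; case: ifP. Qed.

Lemma pair0 (C : Type) i (u v : C) : pairT i u v (idx0 i) = u.
Proof. by rewrite /pairT /=. Qed.
Lemma pair1 (C : Type) n (u v : C) : pairT (q n) u v (idx1 n) = v.
Proof. by rewrite /pairT /=. Qed.

Lemma pairT_inj (C : Type) n (u v u' v' : C) : pairT (q n) u v = pairT (q n) u' v' -> u = u' /\ v = v'.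
Proof.
move=> E; split.
  by have := congr1 (fun f => f (idx0 (q n))) E; rewrite !pair0.
by have := congr1 (fun f => f (idx1 n)) E; rewrite !pair1.
Qed.

Lemma pairT_loop (C : Type) n (u v w : C) : pairT (q n) u v = loopT (q n) w -> u = w /\ v = w.
Proof.
move=> E; split.
  by have := congr1 (fun f => f (idx0 (q n))) E; rewrite !pair0.
by have := congr1 (fun f => f (idx1 n)) E; rewrite !pair1.
Qed.

Lemma loopT_inj (C : Type) i (u w : C) : loopT i u = loopT i w -> u = w.
Proof. by move=> E; have := congr1 (fun f => f (idx0 i)) E. Qed.

Definition Bq (A : relstruct mu) k (u v : carrier A) := @Defs.rel _ _ A (q k) (pairT (q k) u v).
Arguments Bq : clear implicits.

Lemma Bk_emb (A B : relstruct mu) (f : carrier A -> carrier B) k u v : embedding A B f -> Bq A k u v = Bq B k (f u) (f v).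
Proof. by move=> [_ fr]; rewrite /Bq fr comp_pair. Qed.


Definition o0 : 'I_2 := ord0.
Definition o1 : 'I_2 := ord_max.
Lemma o01 : o0 <> o1. Proof. by move/(congr1 val). Qed.

Definition Pt (m : nat) : finstruct mu :=
  existT _ 1%N (fun i (x : 'I_(mu i) -> 'I_1) => `[< i = q m >]).
Definition Ek (k : nat) : finstruct mu := existT _ 2%N (fun i (x : 'I_(mu i) -> 'I_2) =>
  `[< (i = q 0 /\ x = loopT i o0) \/ (i = q 1 /\ x = loopT i o1) \/
      (i = q k.+2 /\ x = pairT i o0 o1) >]).

Lemma Pt0_Ek k : embeds (fs_struct (Pt 0)) (fs_struct (Ek k)).
Proof.
exists (fun _ => o0); split; first by move=> x y _; rewrite (ord1 x) (ord1 y).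
move=> i x /=; apply/asboolP/asboolP => [E|[[E _]|[[E1 E2]|[E1 E2]]]] //.
- by left; split.
- by case: (o01 (@loopT_inj _ i o0 o1 E2)).
- subst i; have [_ E] := @pairT_loop _ _ o0 o1 o0 (esym E2); by case: (o01 (esym E)).
Qed.

Lemma Pt1_Ek k : embeds (fs_struct (Pt 1)) (fs_struct (Ek k)).
Proof.
exists (fun _ => o1); split; first by move=> x y _; rewrite (ord1 x) (ord1 y).
move=> i x /=; apply/asboolP/asboolP => [E|[[E1 E2]|[[E1 E2]|[E1 E2]]]] //.
- by right; left; split.
- by case: (o01 (esym (@loopT_inj _ i o1 o0 E2))).
- subst i; have [E _] := @pairT_loop _ _ o0 o1 o1 (esym E2); by case: (o01 E).
Qed.

Lemma Ek_loop0 k u : @Defs.rel _ _ (fs_struct (Ek k)) (q 0) (loopT _ u) -> u = o0.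
Proof.
move=> /asboolP [[_ E]|[[E _]|[E _]]].
- exact: loopT_inj E.
- by move/qinj: E.
- by move/qinj: E.
Qed.

Lemma Ek_loop1 k u : @Defs.rel _ _ (fs_struct (Ek k)) (q 1) (loopT _ u) -> u = o1.
Proof.
move=> /asboolP [[E _]|[[_ E]|[E _]]].
- by move/qinj: E.
- exact: loopT_inj E.
- by move/qinj: E.
Qed.

Lemma Ek_pair k n : @Defs.rel _ _ (fs_struct (Ek k)) (q n) (pairT _ o0 o1) -> n = k.+2.
Proof.
move=> /asboolP [[E1 E]|[[E1 E]|[E1 E]]].
- move/qinj: E1 => ?; subst n; have [_ E'] := pairT_loop E; by case: (o01 (esym E')).
- move/qinj: E1 => ?; subst n; have [E' _] := pairT_loop E; by case: (o01 E').
- exact: qinj.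
Qed.

Lemma Ek_pair_true k : @Defs.rel _ _ (fs_struct (Ek k)) (q k.+2) (pairT _ o0 o1).
Proof. by apply/asboolP; right; right. Qed.

Lemma Ek_key k k' c : age (fs_struct (Ek k)) c -> age (fs_struct (Ek k')) c ->
  Ole (toOm (Pt 0)) c -> Ole (toOm (Pt 1)) c -> k = k'.
Proof.
move=> /age_rep [e he] /age_rep [e' he'] /Ole_toOm_l [al hal] /Ole_toOm_l [be hbe].
pose u := al ord0; pose v := be ord0.
have ru : @Defs.rel _ _ (fs_struct (rep c)) (q 0) (loopT _ u).
  have [_ r] := hal; have := r (q 0) (loopT _ ord0); rewrite /= => <-; exact/asboolP.
have rv : @Defs.rel _ _ (fs_struct (rep c)) (q 1) (loopT _ v).
  have [_ r] := hbe; have := r (q 1) (loopT _ ord0); rewrite /= => <-; exact/asboolP.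
have [_ r1] := he; have [_ r2] := he'.
have eu : e u = o0 by apply: (@Ek_loop0 k); rewrite -[loopT _ _]/(e \o loopT _ u) -r1.
have ev : e v = o1 by apply: (@Ek_loop1 k); rewrite -[loopT _ _]/(e \o loopT _ v) -r1.
have e'u : e' u = o0 by apply: (@Ek_loop0 k'); rewrite -[loopT _ _]/(e' \o loopT _ u) -r2.
have e'v : e' v = o1 by apply: (@Ek_loop1 k'); rewrite -[loopT _ _]/(e' \o loopT _ v) -r2.
have := Ek_pair_true k.
rewrite -eu -ev -comp_pair -r1 r2 comp_pair e'u e'v => /Ek_pair.
by case.
Qed.

Lemma not_iii : compact (ideal_space mu) -> False.
Proof.
move=> cpt.
pose fk (k : nat) : {ptws Omega mu -> bool} := fun a => `[< age (fs_struct (Ek k)) a >].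
have fkJ k : ideal_space mu (fk k).
  rewrite /ideal_space /=.
  have -> : (fun a => is_true (fk k a)) = age (fs_struct (Ek k)).
    by apply: funext => a; apply: propext; rewrite /fk asboolE.
  exact: age_ideal.
pose F := fmap fk eventually.
have PF : ProperFilter F by typeclasses eauto.
have FJ : F (ideal_space mu) by exists 0%N => // n _ /=; exact: fkJ.
have [p [Jp clp]] := cpt F PF FJ.
pose Am m := [set f : {ptws Omega mu -> bool} | exists k, (m <= k)%N /\ f = fk k].
have FA m : F (Am m) by exists m => // n hn /=; exists n.
have hit m c : exists k, (m <= k)%N /\ fk k c = p c.
  have [f [[k [hk ->]] E]] := clp _ _ (FA m) (ptws_nbhs p c).
  by exists k.
have pa0 : p (toOm (Pt 0)).
  have [k [_ <-]] := hit 0%N (toOm (Pt 0)).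
  by apply/asboolP; apply/age_toOm; exact: Pt0_Ek.
have pa1 : p (toOm (Pt 1)).
  have [k [_ <-]] := hit 0%N (toOm (Pt 1)).
  by apply/asboolP; apply/age_toOm; exact: Pt1_Ek.
have [_ _ dir] := Jp.
have [c [pc h0 h1]] := dir _ _ pa0 pa1.
have [k0 [_ E0]] := hit 0%N c.
have [k1 [hk1 E1]] := hit k0.+1 c.
have := @Ek_key k0 k1 c.
have A0 : age (fs_struct (Ek k0)) c.
  by apply/asboolP; change (is_true (fk k0 c)); rewrite E0.
have A1 : age (fs_struct (Ek k1)) c.
  by apply/asboolP; change (is_true (fk k1 c)); rewrite E1.
move=> /(_ A0 A1 h0 h1) E; subst k1.
by rewrite ltnn in hk1.
Qed.


Definition Phi (A : relstruct mu) : Prop :=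
  (forall u v : carrier A, u <> v -> exists k, Bq A k u v /\ forall k', Bq A k' u v -> k' = k) /\
  (forall (u v w : carrier A) k, u <> v -> u <> w -> v <> w -> Bq A k u v -> Bq A k u w -> False).

Lemma Phi_emb (A B : relstruct mu) (f : carrier A -> carrier B) :
  embedding A B f -> Phi B -> Phi A.
Proof.
move=> he [P1 P2]; have [fi _] := he; split.
  move=> u v uv; have fuv : f u <> f v by move/fi.
  have [k [Bk Uk]] := P1 _ _ fuv; exists k; split; first by rewrite (Bk_emb k u v he).
  by move=> k'; rewrite (Bk_emb k' u v he); exact: Uk.
move=> u v w k uv uw vw; rewrite (Bk_emb k u v he) (Bk_emb k u w he).
by apply: P2 => /fi.
Qed.

Definition Xi : set (Omega mu) := fun a => Phi (fs_struct (rep a)).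

Lemma Phi_toOm F : Phi (fs_struct F) -> Xi (toOm F).
Proof. by have [f [hf _]] := rep_toOm F; apply: Phi_emb hf. Qed.

Lemma Xi_toOm F : Xi (toOm F) -> Phi (fs_struct F).
Proof. by have [f [hf _]] := iso_sym (rep_toOm F); apply: Phi_emb hf. Qed.

Lemma sideP m n (u : 'I_(m + n)) : (exists l, u = lshift n l) \/ (exists r, u = rshift m r).
Proof. by rewrite -(splitK u); case: (fintype.split u) => [l|r]; [left|right]; eexists. Qed.

Lemma LR_neq m n (l : 'I_m) (r : 'I_n) : lshift n l <> rshift m r.
Proof. by move/eqP; rewrite eq_lrshift. Qed.

Lemma Phi_join (Fa Fb : finstruct mu) : Phi (fs_struct Fa) -> Phi (fs_struct Fb) ->
  exists C : finstruct mu, [/\ Phi (fs_struct C), embeds (fs_struct Fa) (fs_struct C) &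
    embeds (fs_struct Fb) (fs_struct C)].
Proof.
case: Fa => na Ra; case: Fb => nb Rb; move=> [Pa1 Pa2] [Pb1 Pb2].
set FA := fs_struct (existT _ na Ra) in Pa1 Pa2 *.
set FB := fs_struct (existT _ nb Rb) in Pb1 Pb2 *.
have [Ma HMa] : exists M, forall k (u v : 'I_na), u <> v -> Bq FA k u v -> (k < M)%N.
  have : forall uv : 'I_na * 'I_na, exists k, uv.1 <> uv.2 -> forall k', Bq FA k' uv.1 uv.2 -> k' = k.
    move=> [u v] /=; case: (pselect (u = v)) => [->|uv]; first by exists 0%N.
    by have [k [_ Uk]] := Pa1 _ _ uv; exists k.
  move=> /choice [K HK]; exists (\max_(uv : 'I_na * 'I_na) K uv).+1 => k u v uv B.
  rewrite ltnS (HK (u, v) uv k B); exact: (leq_bigmax (u, v)).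
have [Mb HMb] : exists M, forall k (u v : 'I_nb), u <> v -> Bq FB k u v -> (k < M)%N.
  have : forall uv : 'I_nb * 'I_nb, exists k, uv.1 <> uv.2 -> forall k', Bq FB k' uv.1 uv.2 -> k' = k.
    move=> [u v] /=; case: (pselect (u = v)) => [->|uv]; first by exists 0%N.
    by have [k [_ Uk]] := Pb1 _ _ uv; exists k.
  move=> /choice [K HK]; exists (\max_(uv : 'I_nb * 'I_nb) K uv).+1 => k u v uv B.
  rewrite ltnS (HK (u, v) uv k B); exact: (leq_bigmax (u, v)).
pose M := (Ma + Mb)%N.
pose code (l : 'I_na) (r : 'I_nb) := (M + l * nb + r)%N.
have code_ge l r : (M <= code l r)%N by rewrite /code -addnA leq_addr.
have code_injr l r1 r2 : code l r1 = code l r2 -> r1 = r2.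
  by move/eqP; rewrite /code eqn_add2l => /eqP /val_inj.
have code_injl l1 l2 r : code l1 r = code l2 r -> l1 = l2.
  have nb0 : (0 < nb)%N by apply: leq_ltn_trans (leq0n r) (ltn_ord r).
  by move/eqP; rewrite /code eqn_add2r eqn_add2l eqn_pmul2r // => /eqP /val_inj.
pose L := @lshift na nb; pose R := @rshift na nb.
pose relC i (x : 'I_(mu i) -> 'I_(na + nb)) : bool :=
  `[< (exists y, x = L \o y /\ Ra i y) \/ (exists y, x = R \o y /\ Rb i y) \/
      (exists k (l : 'I_na) (r : 'I_nb), i = q k /\ k = code l r /\
         (x = pairT i (L l) (R r) \/ x = pairT i (R r) (L l))) >].
pose C : finstruct mu := existT _ (na + nb)%N relC.
have embL : embedding FA (fs_struct C) L.
  split; first exact: lshift_inj.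
  move=> i y /=; apply/idP/asboolP => [H|[[y' [E H]]|[[y' [E _]]|[k [l [r [E1 [_ [E|E]]]]]]]]].
  - by left; exists y.
  - suff -> : y = y' by [].
    by apply: funext => j; apply: lshift_inj; exact: (congr1 (fun f => f j) E).
  - by move: (congr1 (fun f => f (idx0 i)) E) => /= /LR_neq.
  - by subst i; move: (congr1 (fun f => f (idx1 k)) E); rewrite pair1 => /LR_neq.
  - by move: (congr1 (fun f => f (idx0 i)) E); rewrite pair0 => /LR_neq.
have embR : embedding FB (fs_struct C) R.
  split; first exact: rshift_inj.
  move=> i y /=; apply/idP/asboolP => [H|[[y' [E _]]|[[y' [E H]]|[k [l [r [E1 [_ [E|E]]]]]]]]].
  - by right; left; exists y.
  - by move: (congr1 (fun f => f (idx0 i)) E) => /= /esym /LR_neq.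
  - suff -> : y = y' by [].
    by apply: funext => j; apply: rshift_inj; exact: (congr1 (fun f => f j) E).
  - by move: (congr1 (fun f => f (idx0 i)) E); rewrite pair0 => /esym /LR_neq.
  - by subst i; move: (congr1 (fun f => f (idx1 k)) E); rewrite pair1 => /esym /LR_neq.
have BqLR k l r : Bq (fs_struct C) k (L l) (R r) <-> k = code l r.
  rewrite /Bq /=; split.
    move=> /asboolP [[y [E _]]|[[y [E _]]|[k' [l' [r' [E1 [E2 [E|E]]]]]]]].
    - by move: (congr1 (fun f => f (idx1 k)) E); rewrite pair1 => /esym /LR_neq.
    - by move: (congr1 (fun f => f (idx0 (q k))) E); rewrite pair0 => /LR_neq.
    - have [/lshift_inj -> /rshift_inj ->] := pairT_inj E; by move/qinj: E1 ->.
    - by have [/LR_neq] := pairT_inj E.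
  move=> ->; apply/asboolP; right; right; exists (code l r), l, r; split=> //; split=> //; by left.
have BqRL k l r : Bq (fs_struct C) k (R r) (L l) <-> k = code l r.
  rewrite /Bq /=; split.
    move=> /asboolP [[y [E _]]|[[y [E _]]|[k' [l' [r' [E1 [E2 [E|E]]]]]]]].
    - by move: (congr1 (fun f => f (idx0 (q k))) E); rewrite pair0 => /esym /LR_neq.
    - by move: (congr1 (fun f => f (idx1 k)) E); rewrite pair1 => /LR_neq.
    - by have [/esym /LR_neq] := pairT_inj E.
    - have [/rshift_inj -> /lshift_inj ->] := pairT_inj E; by move/qinj: E1 ->.
  move=> ->; apply/asboolP; right; right; exists (code l r), l, r; split=> //; split=> //; by right.
exists C; split; [|by exists L|by exists R].
split.
  move=> u v uv.
  case: (sideP u) => [[u' ?]|[u' ?]]; case: (sideP v) => [[v' ?]|[v' ?]]; subst u v.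
  - have uv' : u' <> v' by move=> E; apply: uv; subst.
    have [k [Bk Uk]] := Pa1 _ _ uv'; exists k.
    rewrite -(@Bk_emb FA (fs_struct C) L k u' v' embL); split=> // k'; rewrite -(@Bk_emb FA (fs_struct C) L k' u' v' embL); exact: Uk.
  - by exists (code u' v'); split; [apply/BqLR|move=> k' /BqLR].
  - by exists (code v' u'); split; [apply/BqRL|move=> k' /BqRL].
  - have uv' : u' <> v' by move=> E; apply: uv; subst.
    have [k [Bk Uk]] := Pb1 _ _ uv'; exists k.
    rewrite -(@Bk_emb FB (fs_struct C) R k u' v' embR); split=> // k'; rewrite -(@Bk_emb FB (fs_struct C) R k' u' v' embR); exact: Uk.
move=> u v w k uv uw vw.
case: (sideP u) => [[u' ?]|[u' ?]]; case: (sideP v) => [[v' ?]|[v' ?]];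
  case: (sideP w) => [[w' ?]|[w' ?]]; subst u v w.
- rewrite -!(@Bk_emb FA (fs_struct C) L k _ _ embL); apply: Pa2.
  + by move=> E; apply: uv; subst.
  + by move=> E; apply: uw; subst.
  + by move=> E; apply: vw; subst.
- rewrite -(@Bk_emb FA (fs_struct C) L k _ _ embL) => B1 /BqLR E.
  have := HMa _ _ _ (fun E => uv (congr1 L E)) B1; have := code_ge u' w'; rewrite -E /M; lia.
- move=> /BqLR E; rewrite -(@Bk_emb FA (fs_struct C) L k _ _ embL) => B1.
  have := HMa _ _ _ (fun E => uw (congr1 L E)) B1; have := code_ge u' v'; rewrite -E /M; lia.
- move=> /BqLR E1 /BqLR E2; apply: vw; congr R; apply: (code_injr u'); by rewrite -E1 -E2.
- move=> /BqRL E1 /BqRL E2; apply: vw; congr L; apply: (code_injl _ _ u'); by rewrite -E1 -E2.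
- move=> /BqRL E; rewrite -(@Bk_emb FB (fs_struct C) R k _ _ embR) => B1.
  have := HMb _ _ _ (fun E => uw (congr1 R E)) B1; have := code_ge v' u'; rewrite -E /M; lia.
- rewrite -(@Bk_emb FB (fs_struct C) R k _ _ embR) => B1 /BqRL E.
  have := HMb _ _ _ (fun E => uv (congr1 R E)) B1; have := code_ge w' u'; rewrite -E /M; lia.
- rewrite -!(@Bk_emb FB (fs_struct C) R k _ _ embR); apply: Pb2.
  + by move=> E; apply: uv; subst.
  + by move=> E; apply: uw; subst.
  + by move=> E; apply: vw; subst.
Qed.

Lemma Xi_ideal : is_ideal Xi.
Proof.
split.
- exists (toOm (emptyF mu)); apply: Phi_toOm; split; by case.
- move=> a b /Ole_rep [f hf] Xb; exact: Phi_emb hf Xb.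
move=> a b Xa Xb.
have [C [PC ea eb]] := Phi_join Xa Xb.
exists (toOm C); split; first exact: Phi_toOm.
- apply/Ole_rep; apply: embeds_trans ea (iso_embeds (iso_sym (rep_toOm C))).
- apply/Ole_rep; apply: embeds_trans eb (iso_embeds (iso_sym (rep_toOm C))).
Qed.

Lemma cantor (K : (nat -> bool) -> nat) : injective K -> False.
Proof.
move=> Kinj.
pose g n : nat -> bool := match pselect (exists S, K S = n) with
  | left H => proj1_sig (cid H) | right _ => fun _ => false end.
pose D n := ~~ g n n.
have gD : g (K D) = D.
  rewrite /g; case: pselect => [H|H]; last by case: H; exists D.
  by apply: Kinj; exact: (proj2_sig (cid H)).
have E : g (K D) (K D) = D (K D) by rewrite gD.
by move: E; rewrite /D; case: (g (K D) (K D)).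
Qed.

Lemma not_rep : ~ representable Xi.
Proof.
move=> [A EA].
have inX F : Phi (fs_struct F) -> embeds (fs_struct F) A.
  by move=> /Phi_toOm; rewrite -EA => /age_toOm.
have Phi_img k (h : 'I_k -> carrier A) : exists (C : finstruct mu) e phi,
    [/\ embedding (fs_struct C) A e, forall j, e (phi j) = h j & Phi (fs_struct C)].
  have [C [e [phi [he ephi]]]] := image_fin h.
  exists C, e, phi; split=> //; apply: Xi_toOm; rewrite -EA; apply/age_toOm; by exists e.
pose PS (S : nat -> bool) : finstruct mu :=
  existT _ 1%N (fun i (x : 'I_(mu i) -> 'I_1) => `[< exists k, i = q k /\ S k >]).
have PhiPS S : Phi (fs_struct (PS S)).
  split; first by move=> u v; rewrite (ord1 u) (ord1 v).
  by move=> u v w k; rewrite (ord1 u) (ord1 v).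
pose c S := (proj1_sig (cid (inX _ (PhiPS S)))) ord0.
have color S k : @Defs.rel _ _ A (q k) (loopT _ (c S)) = S k.
  have [_ r] := proj2_sig (cid (inX _ (PhiPS S))).
  rewrite /c -[loopT _ _]/(_ \o loopT _ ord0) -r /=.
  apply/asboolP/idP => [[k' [/qinj -> //]]|Sk]; by exists k.
have c_inj S S' : c S = c S' -> S = S'.
  by move=> E; apply: funext => k; rewrite -!color E.
pose Sp (S : nat -> bool) n := if n is m.+1 then S m else true.
have Sp_inj S S' : Sp S = Sp S' -> S = S'.
  by move=> E; apply: funext => m; have := congr1 (fun f => f m.+1) E.
pose z := c (fun _ => false).
have zc S : z <> c (Sp S).
  by move=> /c_inj /(congr1 (fun f => f 0%N)).
have exK S : exists k, Bq A k z (c (Sp S)).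
  pose h (j : 'I_2) := if (j : nat) == 0%N then z else c (Sp S).
  have [C [e [phi [he eh [P1 _]]]]] := Phi_img _ h.
  have ne : phi o0 <> phi o1.
    by move=> E; apply: (zc S); have := eh o1; rewrite -E eh.
  have [k [Bk _]] := P1 _ _ ne; exists k.
  by rewrite (Bk_emb k _ _ he) !eh in Bk.
have [K HK] := choice exK.
apply: (@cantor K) => S S' E.
apply/(@contrapT (S = S')) => SS'.
pose h (j : 'I_3) := if (j : nat) == 0%N then z else if (j : nat) == 1%N then c (Sp S) else c (Sp S').
have [C [e [phi [he eh [_ P2]]]]] := Phi_img _ h.
pose j0 : 'I_3 := ord0; pose j1 : 'I_3 := Ordinal (isT : (1 < 3)%N);
pose j2 : 'I_3 := Ordinal (isT : (2 < 3)%N).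
apply: (P2 (phi j0) (phi j1) (phi j2) (K S)).
- by move=> E'; apply: (zc S); have := eh j1; rewrite -E' eh.
- by move=> E'; apply: (zc S'); have := eh j2; rewrite -E' eh.
- move=> E'; apply: SS'; apply: Sp_inj; apply: c_inj.
  by have := eh j2; rewrite -E' eh.
- by rewrite (Bk_emb _ _ _ he) !eh; exact: HK.
- by rewrite (Bk_emb _ _ _ he) !eh E; exact: HK.
Qed.

Lemma not_i : (forall X : set (Omega mu), is_ideal X -> representable X) -> False.
Proof. by move=> H; apply: not_rep; apply: H; exact: Xi_ideal. Qed.

End Tuples.

Theorem theorem1 (I : Type) (mu : I -> nat) (mu_pos : forall i, (0 < mu i)%N) :
  [/\ ((forall X : set (Omega mu), is_ideal X -> representable X) <->
        finite_set [set i | (2 <= mu i)%N]),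
      (finite_set [set i | (2 <= mu i)%N] <-> compact (ideal_space mu)) &
      ((forall X : set (Omega mu), is_ideal X -> representable X) <->
        compact (ideal_space mu))].
Proof.
have H1 : (forall X : set (Omega mu), is_ideal X -> representable X) ->
    finite_set [set i | (2 <= mu i)%N].
  move=> H; apply: contrapT => NF.
  have [q [qi qN]] := inf_inj NF.
  exact: (not_i mu_pos qi qN H).
have H2 : compact (ideal_space mu) -> finite_set [set i | (2 <= mu i)%N].
  move=> H; apply: contrapT => NF.
  have [q [qi qN]] := inf_inj NF.
  exact: (not_iii mu_pos qi qN H).
have H3 : finite_set [set i | (2 <= mu i)%N] -> compact (ideal_space mu).
  by move=> NF; exact: (ii_iii mu_pos NF).
have H4 : finite_set [set i | (2 <= mu i)%N] ->
    (forall X : set (Omega mu), is_ideal X -> representable X).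
  by move=> NF X; exact: (ii_i mu_pos NF).
split; split=> h.
- exact: H1.
- exact: H4.
- exact: H3.
- exact: H2.
- exact: H3 (H1 h).
- exact: H4 (H2 h).
Qed.
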